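(* Consider $m$ edges, a fraction $\omega$ of which lie inside detected communities and a fraction $1-\omega$ outside. Each edge has a statistic $z$; for edges inside communities $z$ has density $\pi_0^{in}f_0+\pi_1^{in}f_1$ and for edges outside communities $z$ has density $\pi_0^{out}f_0+\pi_1^{out}f_1$ (where $\pi_0^{in}+\pi_1^{in}=1$, $\pi_0^{out}+\pi_1^{out}=1$, the component labelled $0$ corresponding to truly unconnected edges, $\delta=0$, and $1$ to truly connected edges, $\delta=1$), so that overall $\pi_0=\omega\pi_0^{in}+(1-\omega)\pi_0^{out}$, $\pi_1=1-\pi_0$. For $c\in\{0,1\}$ let $F_c(z_0)=\int_{z_0}^\infty f_c(z)\,dz$. The universal thresholding rule declares an edge connected ($\widehat\delta^{Univ}=1$) iff $z>z_0$; the NICE rule declares an edge inside communities connected iff $z>z_{0,in}$ and an edge outside communities connected iff $z>z_{0,out}$, where $z_{0,in}<z_0<z_{0,out}$. Suppose Condition 6 holds: $$\frac{F_0(z_0)-F_0(z_{0,out})}{F_0(z_{0,in})-F_0(z_0)}>\frac{\omega\pi_0^{in}}{(1-\omega)\pi_0^{out}},\qquad \frac{F_1(z_0)-F_1(z_{0,out})}{F_1(z_{0,in})-F_1(z_0)}<\frac{\omega\pi_1^{in}}{(1-\omega)\pi_1^{out}}.$$ Then (1) the expected number of false positive edges satisfies $\mathrm{E}\big(\sum_{i<j}I(\widehat\delta^{NICE}_{ij}=1,\ \delta_{ij}=0)\big)\le \mathrm{E}\big(\sum_{i<j}I(\widehat\delta^{Univ}_{ij}=1,\ \delta_{ij}=0)\big)$;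 and (2) the expected number of false negative edges satisfies $\mathrm{E}\big(\sum_{i<j}I(\widehat\delta^{NICE}_{ij}=0,\ \delta_{ij}=1)\big)\le \mathrm{E}\big(\sum_{i<j}I(\widehat\delta^{Univ}_{ij}=0,\ \delta_{ij}=1)\big)$.
   Context: This concerns thresholding of a correlation matrix whose edges (pairs $i<j$ of variables) are split into edges inside detected community subgraphs and edges outside them. $\omega=\big(\sum_{c=1}^C|V_c|(|V_c|-1)/2\big)/\big(|V|(|V|-1)/2\big)$ is the proportion of edges lying inside the communities $G_c=(V_c,E_c)$, $c=1,\dots,C$, of a vertex partition of $V$. $f_0$ (null) and $f_1$ (non-null) are densities common to inside and outside edges; $\delta_{ij}$ indicates whether edge $(i,j)$ is truly connected. $z_0$ is the universal threshold cutoff, $z_{0,in}$ the cutoff for within-community edges and $z_{0,out}$ the cutoff for edges outside communities. *)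

(* Defs.v *)
From HB Require Import structures.
From mathcomp Require Import all_boot all_order all_algebra.
From mathcomp Require Import all_classical all_reals all_analysis.
Set Implicit Arguments. Unset Strict Implicit. Unset Printing Implicit Defensive.
Import Order.TTheory GRing.Theory Num.Theory.
Local Open Scope classical_set_scope.
Local Open Scope ring_scope.

Definition edge_set (p : nat) : {set 'I_p * 'I_p} :=
  [set e : 'I_p * 'I_p | (e.1 < e.2)%N].

(* Communities are given by a labelling comm : 'I_p -> 'I_C of the vertices
   (a vertex partition); an edge lies inside the communities iff both
   endpoints are in the same community. *)
Definition inside (p C : nat) (comm : 'I_p -> 'I_C) (e : 'I_p * 'I_p) : bool :=
  comm e.1 == comm e.2.

(* omega = (sum_c |V_c|(|V_c|-1)/2) / (|V|(|V|-1)/2) : the proportion of edges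
   lying inside communities. *)
Definition omega (R : realType) (p C : nat) (comm : 'I_p -> 'I_C) : R :=
  #|[set e in edge_set p | inside comm e]|%:R / #|edge_set p|%:R.

Definition Ftail (R : realType) (f : R -> R) (t : R) : R :=
  Rintegral lebesgue_measure `]t, +oo[ f.

Definition univ_rule (R : realType) (z0 : R) (z : R) : bool := z0 < z.

Definition nice_rule (R : realType) (p C : nat) (comm : 'I_p -> 'I_C)
  (zin zout : R) (e : 'I_p * 'I_p) (z : R) : bool :=
  if inside comm e then zin < z else zout < z.

Definition num_FP (R : realType) (T : Type) (p : nat)
  (rule : 'I_p * 'I_p -> R -> bool) (z : 'I_p * 'I_p -> T -> R)
  (delta : 'I_p * 'I_p -> T -> bool) : T -> R :=
  fun w => \sum_(e in edge_set p) (rule e (z e w) && ~~ delta e w)%:R.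

Definition num_FN (R : realType) (T : Type) (p : nat)
  (rule : 'I_p * 'I_p -> R -> bool) (z : 'I_p * 'I_p -> T -> R)
  (delta : 'I_p * 'I_p -> T -> bool) : T -> R :=
  fun w => \sum_(e in edge_set p) (~~ rule e (z e w) && delta e w)%:R.

(* Main.v *)
Require Import Defs.
From HB Require Import structures.
From mathcomp Require Import all_boot all_order all_algebra.
From mathcomp Require Import all_classical all_reals all_analysis.
From mathcomp Require Import measurable_realfun.
From mathcomp.algebra_tactics Require Import ring lra.
Import Order.TTheory GRing.Theory Num.Theory.
Local Open Scope classical_set_scope.
Local Open Scope ring_scope.

Section S.
Context (R : realType) (d : measure_display) (T : measurableType d) (P : probability T R).

Lemma E_ind (b : T -> bool) (S : set T) : measurable S -> (forall w, b w <-> S w) ->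
  ('E_P[fun w => (b w)%:R] = P S)%E.
Proof.
move=> mS H; rewrite -expectation_indic //; congr expectation; apply/funext => w.
rewrite indicE; case: (boolP (b w)) => hb.
  by rewrite mem_set //; apply/H.
by rewrite memNset // => /H h; rewrite h in hb.
Qed.

Lemma E_sum (I : finType) (A : {set I}) (g : I -> T -> R) :
  (forall e w, (0 <= g e w)%R) -> (forall e, measurable_fun setT (g e)) ->
  ('E_P[fun w => (\sum_(e in A) g e w)%R] = \sum_(e in A) 'E_P[g e])%E.
Proof.
move=> g0 mg; rewrite unlock.
under eq_integral do rewrite -sumEFin big_mkcond.
rewrite ge0_integral_sum //=.
- apply: esym; rewrite big_mkcond; apply: eq_bigr => k _; case: ifP => // _.
  by rewrite integral0.
- by move=> k; case: (k \in A); [exact/measurable_EFinP | exact: measurable_cst].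
- by move=> k x _; case: ifP => // _; rewrite lee_fin.
Qed.

Lemma ind_meas (b : T -> bool) (S : set T) : measurable S -> (forall w, b w <-> S w) ->
  measurable_fun setT (fun w => (b w)%:R : R).
Proof.
move=> mS H; have -> : (fun w => (b w)%:R : R) = \1_S.
  apply/funext => w; rewrite indicE; case: (boolP (b w)) => hb.
    by rewrite mem_set //; apply/H.
  by rewrite memNset // => /H h; rewrite h in hb.
exact: measurable_indic.
Qed.
End S.

Lemma tailfin (R : realType) (f : R -> R) (mf : measurable_fun setT f) (f_ge0 : forall x, 0 <= f x)
  (f_int1 : (\int[lebesgue_measure]_x (f x)%:E = 1)%E) (A : set R) : measurable A ->
  (\int[lebesgue_measure]_(x in A) (f x)%:E)%E = (Rintegral lebesgue_measure A f)%:E.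
Proof.
move=> mA; rewrite /Rintegral fineK // ge0_fin_numE; last first.
  by apply: integral_ge0 => x _; rewrite lee_fin.
apply: (le_lt_trans (y := 1%E)); last exact: ltey.
rewrite -f_int1; apply: ge0_subset_integral => //.
- exact/measurable_EFinP.
- by move=> x _; rewrite lee_fin.
Qed.

Lemma lowtail (R : realType) (f : R -> R) (mf : measurable_fun setT f) (f_ge0 : forall x, 0 <= f x)
  (f_int1 : (\int[lebesgue_measure]_x (f x)%:E = 1)%E) (t : R) :
  Rintegral lebesgue_measure `]-oo, t] f = 1 - Ftail f t.
Proof.
have hU : [set: R] = `]-oo, t] `|` `]t, +oo[.
  apply/seteqP; split => x //= _.
  by rewrite /= !in_itv /=; case: (leP x t) => h; [left|right].
have hD : `]-oo, t] `&` `]t, +oo[ = set0 :> set R.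
  apply/seteqP; split => // x /=.
  rewrite !in_itv /= andbT => -[h1 h2].
  by move: h1; rewrite leNgt h2.
have mEf : measurable_fun (`]-oo, t] `|` `]t, +oo[) (fun x => (f x)%:E).
  by rewrite -hU; exact/measurable_EFinP.
have H : (\int[lebesgue_measure]_(x in `]-oo, t] `|` `]t, +oo[) (f x)%:E =
    \int[lebesgue_measure]_(x in `]-oo, t]) (f x)%:E +
    \int[lebesgue_measure]_(x in `]t, +oo[) (f x)%:E)%E.
  apply: ge0_integral_setU => //.
  - by move=> x _; rewrite lee_fin.
  - exact/disj_set2P.
have h1 := @tailfin R f mf f_ge0 f_int1 _ (measurable_itv `]-oo, t]).
have h2 := @tailfin R f mf f_ge0 f_int1 _ (measurable_itv `]t, +oo[).
rewrite -hU f_int1 h1 h2 -EFinD in H.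
have H' : 1 = Rintegral lebesgue_measure `]-oo, t] f + Ftail f t.
  by case: H.
by rewrite H' addrK.
Qed.

Theorem theorem3 (R : realType) (d : measure_display) (T : measurableType d)
  (P : probability T R) (p C : nat) (comm : 'I_p -> 'I_C)
  (f0 f1 : R -> R)
  (mf0 : measurable_fun setT f0) (mf1 : measurable_fun setT f1)
  (f0_ge0 : forall x, 0 <= f0 x) (f1_ge0 : forall x, 0 <= f1 x)
  (f0_int1 : (\int[lebesgue_measure]_x (f0 x)%:E = 1)%E)
  (f1_int1 : (\int[lebesgue_measure]_x (f1 x)%:E = 1)%E)
  (pi0in pi0out : R)
  (hpi0in : 0 < pi0in < 1) (hpi0out : 0 < pi0out < 1)
  (homega : 0 < omega R comm < 1)
  (z : 'I_p * 'I_p -> T -> R) (delta : 'I_p * 'I_p -> T -> bool)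
  (mz : forall e, measurable_fun setT (z e))
  (mdelta : forall e, measurable [set w | delta e w])
  (* mixture model: conditionally on delta_e = c, z_e has density f_c,
     with P(delta_e = 0) = pi0^in or pi0^out according to where e lies *)
  (law0 : forall e, e \in edge_set p -> forall A : set R, measurable A ->
     P ([set w | delta e w = false] `&` (z e @^-1` A)) =
     ((if inside comm e then pi0in else pi0out)%:E *
        \int[lebesgue_measure]_(x in A) (f0 x)%:E)%E)
  (law1 : forall e, e \in edge_set p -> forall A : set R, measurable A ->
     P ([set w | delta e w = true] `&` (z e @^-1` A)) =
     ((if inside comm e then 1 - pi0in else 1 - pi0out)%:E *
        \int[lebesgue_measure]_(x in A) (f1 x)%:E)%E)
  (z0 zin zout : R) (hzin : zin < z0) (hzout : z0 < zout)
  (* the ratios in Condition 6 are well defined *)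
  (hden0 : Ftail f0 z0 < Ftail f0 zin) (hden1 : Ftail f1 z0 < Ftail f1 zin)
  (cond6a : (Ftail f0 z0 - Ftail f0 zout) / (Ftail f0 zin - Ftail f0 z0) >
            (omega R comm * pi0in) / ((1 - omega R comm) * pi0out))
  (cond6b : (Ftail f1 z0 - Ftail f1 zout) / (Ftail f1 zin - Ftail f1 z0) <
            (omega R comm * (1 - pi0in)) / ((1 - omega R comm) * (1 - pi0out))) :
  ('E_P[num_FP (nice_rule comm zin zout) z delta]
     <= 'E_P[num_FP (fun _ => univ_rule z0) z delta])%E /\
  ('E_P[num_FN (nice_rule comm zin zout) z delta]
     <= 'E_P[num_FN (fun _ => univ_rule z0) z delta])%E.
Proof.

set E := edge_set p.
set pi0 := fun e => if inside comm e then pi0in else pi0out.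
have mint : forall A : set R, measurable A -> forall e, measurable (z e @^-1` A).
  by move=> A mA e; rewrite -[z e @^-1` A]setTI; exact: mz.
have mdF : forall e, measurable [set w | delta e w = false].
  move=> e; have -> : [set w | delta e w = false] = ~` [set w | delta e w].
    by apply/seteqP; split => w /=; case: (delta e w).
  exact: measurableC.
have mdT : forall e, measurable [set w | delta e w = true] by move=> e; exact: mdelta.
have FPe : forall (t : R) e, e \in E ->
  ('E_P[fun w => ((t < z e w) && ~~ delta e w)%:R%R] = (pi0 e * Ftail f0 t)%R%:E)%E.
  move=> t e he.
  rewrite (@E_ind _ _ _ _ _ ([set w | delta e w = false] `&` z e @^-1` `]t, +oo[)).
  - by rewrite law0 // tailfin //; exact: measurable_itv.
  - by apply: measurableI => //; apply: mint; exact: measurable_itv.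
  - move=> w /=; rewrite in_itv /= andbT.
    by case: (delta e w); case: (t < z e w); split => //; case.
have FNe : forall (t : R) e, e \in E ->
  ('E_P[fun w => (~~ (t < z e w) && delta e w)%:R%R] = ((1 - pi0 e) * (1 - Ftail f1 t))%R%:E)%E.
  move=> t e he.
  rewrite (@E_ind _ _ _ _ _ ([set w | delta e w = true] `&` z e @^-1` `]-oo, t])).
  - rewrite law1 //.
    rewrite (@tailfin R f1 mf1 f1_ge0 f1_int1 _ (measurable_itv _)).
    rewrite (@lowtail R f1 mf1 f1_ge0 f1_int1).
    by rewrite -EFinM /pi0; case: ifP.
  - by apply: measurableI => //; apply: mint; exact: measurable_itv.
  - move=> w /=; rewrite in_itv /= -leNgt.
    by case: (delta e w); case: (z e w <= t); split => //; case.
have FP : forall thr : 'I_p * 'I_p -> R,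
  ('E_P[num_FP (fun e x => (thr e < x)%R) z delta] = (\sum_(e in E) pi0 e * Ftail f0 (thr e))%R%:E)%E.
  move=> thr; rewrite /num_FP E_sum.
  - rewrite -sumEFin; apply: eq_bigr => e he; exact: FPe.
  - by move=> e w; rewrite ler0n.
  - move=> e; apply: (@ind_meas _ _ _ _ ([set w | delta e w = false] `&` z e @^-1` `]thr e, +oo[)).
    + by apply: measurableI => //; apply: mint; exact: measurable_itv.
    + move=> w /=; rewrite in_itv /= andbT.
      by case: (delta e w); case: (thr e < z e w); split => //; case.
have FN : forall thr : 'I_p * 'I_p -> R,
  ('E_P[num_FN (fun e x => (thr e < x)%R) z delta] = (\sum_(e in E) (1 - pi0 e) * (1 - Ftail f1 (thr e)))%R%:E)%E.
  move=> thr; rewrite /num_FN E_sum.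
  - rewrite -sumEFin; apply: eq_bigr => e he; exact: FNe.
  - by move=> e w; rewrite ler0n.
  - move=> e; apply: (@ind_meas _ _ _ _ ([set w | delta e w = true] `&` z e @^-1` `]-oo, thr e])).
    + by apply: measurableI => //; apply: mint; exact: measurable_itv.
    + move=> w /=; rewrite in_itv /= -leNgt.
      by case: (delta e w); case: (z e w <= thr e); split => //; case.
set thr := fun e => if inside comm e then zin else zout.
have -> : nice_rule comm zin zout = (fun e x => thr e < x).
  by apply/funext => e; apply/funext => x; rewrite /nice_rule /thr; case: ifP.
rewrite (FP thr) (FN thr) (FP (fun _ => z0)) (FN (fun _ => z0)) !lee_fin.
set ni := \sum_(e in E | inside comm e) (1 : R).
set no := \sum_(e in E | ~~ inside comm e) (1 : R).
have Hs : forall (gi go : R) (g : 'I_p * 'I_p -> R),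
    (forall e, inside comm e -> g e = gi) -> (forall e, ~~ inside comm e -> g e = go) ->
    \sum_(e in E) g e = ni * gi + no * go.
  move=> gi go g h1 h2; rewrite (bigID (inside comm)) /=; congr (_ + _);
    rewrite /ni /no mulr_suml; apply: eq_bigr => e /andP[_ h]; rewrite mul1r; auto.
have ni0 : 0 <= ni by apply: sumr_ge0 => *; exact: ler01.
have no0 : 0 <= no by apply: sumr_ge0 => *; exact: ler01.
have hN : #|E|%:R = ni + no :> R.
  rewrite -sumr_const (Hs 1 1) ?mulr1 //.
have hni : #|[set e in E | inside comm e]|%:R = ni :> R.
  rewrite -sumr_const /ni; apply: eq_bigl => e; by rewrite inE.
have hom : omega R comm = ni / (ni + no) by rewrite /omega hni hN.
have Npos : 0 < ni + no.
  rewrite lt_def addr_ge0 // andbT; apply/eqP => h0.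
  by move: homega; rewrite hom h0 invr0 mulr0 ltxx.
move: cond6a cond6b homega; rewrite hom => c6a c6b /andP[om0 om1].
have hin : forall e, inside comm e -> pi0 e = pi0in /\ thr e = zin.
  by move=> e h; rewrite /pi0 /thr h.
have hout : forall e, ~~ inside comm e -> pi0 e = pi0out /\ thr e = zout.
  by move=> e h; rewrite /pi0 /thr (negbTE h).
move: hpi0in hpi0out => /andP[p1 p2] /andP[p3 p4].
have om1' : 0 < 1 - ni / (ni + no) by rewrite subr_gt0.
split.
- rewrite (Hs (pi0in * Ftail f0 zin) (pi0out * Ftail f0 zout));
    last 2 first.
  + by move=> e /hin[-> ->].
  + by move=> e /hout[-> ->].
  rewrite (Hs (pi0in * Ftail f0 z0) (pi0out * Ftail f0 z0)); last 2 first.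
  + by move=> e /hin[-> _].
  + by move=> e /hout[-> _].
  have ha : 0 < (Ftail f0 zin - Ftail f0 z0) by rewrite subr_gt0.
  have hc : 0 < (1 - ni / (ni + no)) * pi0out by apply: mulr_gt0; rewrite // ?subr_gt0.
  move: c6a; rewrite ltr_pdivrMr // => h.
  rewrite -(ltr_pM2r (mulr_gt0 ha Npos)) in h.
  have e1 : (ni / (ni + no) * pi0in) * ((Ftail f0 zin - Ftail f0 z0) * (ni + no)) = ni * pi0in * (Ftail f0 zin - Ftail f0 z0).
    by field; rewrite ?gt_eqF.
  have e2 : ((Ftail f0 z0 - Ftail f0 zout) / (Ftail f0 zin - Ftail f0 z0) * ((1 - ni / (ni + no)) * pi0out)) * ((Ftail f0 zin - Ftail f0 z0) * (ni + no)) = (Ftail f0 z0 - Ftail f0 zout) * (no * pi0out).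
    by field; rewrite ?gt_eqF.
  rewrite e1 e2 in h; lra.
- rewrite (Hs ((1 - pi0in) * (1 - Ftail f1 zin)) ((1 - pi0out) * (1 - Ftail f1 zout)));
    last 2 first.
  + by move=> e /hin[-> ->].
  + by move=> e /hout[-> ->].
  rewrite (Hs ((1 - pi0in) * (1 - Ftail f1 z0)) ((1 - pi0out) * (1 - Ftail f1 z0))); last 2 first.
  + by move=> e /hin[-> _].
  + by move=> e /hout[-> _].
  have ha : 0 < (Ftail f1 zin - Ftail f1 z0) by rewrite subr_gt0.
  have hc : 0 < (1 - ni / (ni + no)) * (1 - pi0out) by apply: mulr_gt0; rewrite // ?subr_gt0.
  move: c6b; rewrite ltr_pdivlMr // => h.
  rewrite -(ltr_pM2r (mulr_gt0 ha Npos)) in h.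
  have e1 : ((Ftail f1 z0 - Ftail f1 zout) / (Ftail f1 zin - Ftail f1 z0) * ((1 - ni / (ni + no)) * (1 - pi0out))) * ((Ftail f1 zin - Ftail f1 z0) * (ni + no)) = (Ftail f1 z0 - Ftail f1 zout) * (no * (1 - pi0out)).
    by field; rewrite ?gt_eqF.
  have e2 : (ni / (ni + no) * (1 - pi0in)) * ((Ftail f1 zin - Ftail f1 z0) * (ni + no)) = ni * (1 - pi0in) * (Ftail f1 zin - Ftail f1 z0).
    by field; rewrite ?gt_eqF.
  rewrite e1 e2 in h; lra.
Qed.
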